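(* Let $P$ be a connected shrub on a finite set $I$ with at least two elements. Then there exists a vertex of height $1$ that covers every vertex of height $0$ of $P$.
   Context: A shrub $P$ on a finite set $I$ is a set $E$ of edges (unordered pairs $\{i,j\}$ of distinct elements of $I$) together with a height function $h_P:I\to\mathbb{N}$. Say that $j$ covers $i$ if $\{i,j\}\in E$ and $h_P(j)=h_P(i)+1$. The axioms are: (1) if $\{i,j\}\in E$ then $h_P(i)=h_P(j)\pm 1$; (2) if $h_P(j)>0$ then there is an edge $\{i,j\}$ with $h_P(i)=h_P(j)-1$; (3) there are no four distinct vertices $a,b,c,d$ such that $a$ covers $b$ and $c$, $c$ covers $d$, and $\{b,d\}\notin E$; (4) there are no five distinct vertices $a,b,c,d,e$ such that $a$ covers $c$ and $d$, $b$ covers $d$ and $e$, $\{a,e\}\notin E$ and $\{b,c\}\notin E$. A shrub is connected if its underlying graph $(I,E)$ is connected. *)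

(* Defs.v *)
From mathcomp Require Import all_boot.
Set Implicit Arguments. Unset Strict Implicit. Unset Printing Implicit Defensive.

Definition simple_graph (I : finType) (E : rel I) : Prop :=
  (forall i, ~~ E i i) /\ (forall i j, E i j = E j i).

Definition covers (I : finType) (E : rel I) (h : I -> nat) (j i : I) : bool :=
  E i j && (h j == (h i).+1).

Definition is_shrub (I : finType) (E : rel I) (h : I -> nat) : Prop :=
  simple_graph E /\
  (forall i j, E i j -> h i = (h j).+1 \/ h j = (h i).+1) /\
  (forall j, 0 < h j -> exists i, E i j /\ (h i).+1 = h j) /\
  (forall a b c d : I, uniq [:: a; b; c; d] ->
     covers E h a b -> covers E h a c -> covers E h c d -> E b d) /\
  (forall a b c d e : I, uniq [:: a; b; c; d; e] ->
     covers E h a c -> covers E h a d -> covers E h b d -> covers E h b e ->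
     ~ (~~ E a e /\ ~~ E b c)).

Definition graph_connected (I : finType) (E : rel I) : Prop :=
  forall i j : I, connect E i j.

(* Main.v *)
Require Import Defs.
From mathcomp Require Import all_boot.

Theorem mainTheorem1 (I : finType) (E : rel I) (h : I -> nat) :
  is_shrub E h -> graph_connected E -> 1 < #|I| ->
  exists v : I, h v = 1 /\ forall u : I, h u = 0 -> covers E h v u.
Proof.
move=> [[Eirr Esym] [A1 [A2 [A3 A4]]]] Hconn HI.
have Rh : forall x y, covers E h x y -> h x = (h y).+1.
  by move=> x y /andP[_ /eqP].
have neq : forall x y, h x != h y -> x != y.
  by move=> x y; apply: contraNneq => ->.
have inv : forall x y, connect (covers E h) x y ->
    x = y \/ exists2 x1, covers E h x x1 & connect (covers E h) x1 y.
  move=> x y /connectP [p]; case: p => [|x1 p] /= pth ->; first by left.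
  right; move/andP: pth => [Rx1 pth]; exists x1 => //.
  by apply/connectP; exists p.
have inv0 : forall x y, connect (covers E h) x y -> h x = 0 -> x = y.
  move=> x y /inv [//|[x1 /Rh -> _]] //.
have down : forall n x, h x = n -> exists z, h z = 0.
  elim/ltn_ind => n IH x hx; case: n IH hx => [|n] IH hx; first by exists x.
  have [i [Ei hi]] := A2 x (ltac:(by rewrite hx)).
  apply: (IH n (ltnSn n) i); apply/eqP; by rewrite -eqSS hi hx.
have [x0 _] : exists x : I, x \in predT by apply/card_gt0P; apply: ltnW.
have [z0 hz0] := down _ x0 erefl.
have [y0] : exists y, y \in predC1 z0.
  by apply/card_gt0P; rewrite cardC1 -ltnS (ltn_predK HI).
rewrite !inE => yz.
have [x1 hx1] : exists x1, h x1 == 1.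
  move: (Hconn z0 y0) => /connectP [[|x1 p] /= pth Ey].
    by rewrite Ey eqxx in yz.
  move/andP: pth => [Ex _]; exists x1.
  by case: (A1 _ _ Ex); rewrite hz0 // => ->.
case: (@arg_maxnP I x1 (fun i => h i == 1)
         (fun i => #|[pred y | covers E h i y]|) hx1) => a ha amax.
move/eqP: ha => ha.
have dich : forall b d e, h b = 1 -> covers E h b d -> covers E h a d ->
    covers E h b e -> h e = 0 -> covers E h a e.
  move=> b d e hb Rbd Rad Rbe he; apply/negPn/negP => nRae.
  have ab : a != b by apply: contraNneq nRae => ->.
  have [c Rac nRbc] : exists2 c, covers E h a c & ~~ covers E h b c.
    case: (boolP [exists c, covers E h a c && ~~ covers E h b c]).
      by move/existsP => [c /andP[]]; exists c.
    move/existsPn => H.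
    have sub : [pred y | covers E h a y] \subset [pred y | covers E h b y].
      apply/subsetP => y; rewrite !inE; move: (H y).
      by rewrite negb_and negbK => /orP[/negbTE->|].
    have : #|[pred y | covers E h a y]| < #|[pred y | covers E h b y]|.
      apply: proper_card; rewrite properE sub /=.
      by apply/subsetPn; exists e; rewrite !inE.
    by move=> lt; move: (amax b (introT eqP hb)) => /=; rewrite leqNgt lt.
  have hc : h c = 0 by move: (Rh _ _ Rac); rewrite ha => -[].
  have hd : h d = 0 by move: (Rh _ _ Rad); rewrite ha => -[].
  apply: (A4 a b c d e _ Rac Rad Rbd Rbe); last split.
  - rewrite /= !inE !negb_or.
    have hne : forall x y, h x = 1 -> h y = 0 -> x != y.
      by move=> x y hx hy; apply: neq; rewrite hx hy.
    rewrite ab (hne a c) ?(hne a d) ?(hne a e) ?(hne b c) ?(hne b d) ?(hne b e) //=.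
    rewrite andbT; apply/andP; split; first apply/andP; first split.
    + by apply: contraNneq nRbc => ->.
    + by apply: contraNneq nRae => <-.
    + by apply: contraNneq nRae => <-.
  - move: nRae; rewrite /covers ha he /= andbT Esym //.
  - move: nRbc; rewrite /covers hb hc /= andbT Esym //.
exists a; split => // z hz.
have [s [Esa hs]] := A2 a (ltac:(by rewrite ha)).
have Sas : covers E h a s by rewrite /covers Esa -hs eqxx.
have hs0 : h s = 0 by move: hs; rewrite ha => -[].
pose P v := exists2 s, covers E h a s & connect (covers E h) v s.
have clos : forall u v, E u v -> P u -> P v.
  move=> u v Euv [s' Sas' Cus].
  have hs' : h s' = 0 by move: (Rh _ _ Sas'); rewrite ha => -[].
  case: (A1 u v Euv) => huv; last first.
    exists s' => //; apply: connect_trans (connect1 _) Cus.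
    by rewrite /covers Euv huv eqxx.
  have Ruv : covers E h u v by rewrite /covers Esym Euv huv eqxx.
  case: (inv _ _ Cus) => [eus|[u1 Ruu1 Cu1s]].
    by move: huv; rewrite eus hs'.
  have hu1 : h u1 = h v by move: (Rh _ _ Ruu1); rewrite huv => -[].
  case hv: (h v) => [|k].
    have eu1 : u1 = s' by apply: inv0 => //; rewrite hu1.
    rewrite eu1 in Ruu1.
    exists v => //; apply: (dich u s') => //; by rewrite huv hv.
  case: (eqVneq v u1) => [->|nv]; first by exists s'.
  case: (inv _ _ Cu1s) => [eus|[d Ru1d Cds]].
    by move: hu1; rewrite eus hs' hv.
  have hd : h d = k by move: (Rh _ _ Ru1d); rewrite hu1 hv => -[].
  have hu : h u = k.+2 by rewrite huv hv.
  have Evd : E v d.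
    apply: (A3 u v u1 d) => //.
    rewrite /= !inE !negb_or nv /= !andbT.
    rewrite !neq // ?hu ?hv ?hd ?hu1 ?hv //.
    all: try (by elim: (k)).
  exists s' => //; apply: connect_trans (connect1 _) Cds.
  by rewrite /covers Esym Evd hv hd eqxx.
have trans : forall p x, path E x p -> P x -> P (last x p).
  elim=> [|y p IH] x //= /andP[Exy pth] Px.
  by apply: IH pth (clos x y Exy Px).
have Ps : P s by exists s.
move: (Hconn s z) => /connectP [p pth ->] in hz *.
have [s' Sas' Cs] := trans p s pth Ps.
by rewrite (inv0 _ _ Cs hz).
Qed.
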